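(* Let $N$ be a positive even integer and let $\sigma\colon\{0,1\}^*\to\{0,1,\#\}^*$ be the substitution defined by $\sigma(0)=\#0^{N-1}$ and $\sigma(1)=\#1^{N-1}$. Let $\mathbf{w}$ be an infinite binary word. If an abelian power $u_0\cdots u_{e-1}$ with $e\ge N$ occurs in $\sigma(\mathbf{w})$, then $\mathbf{w}$ contains an abelian power $v_0\cdots v_{e-1}$ with $|v_0|=|u_0|/N$.
   Context: Two finite words $u,v$ are abelian equivalent, written $u\sim v$, if they are permutations of each other. An abelian power of exponent $e$ (a positive integer) and period $m$ is a word of the form $u_0u_1\cdots u_{e-1}$ where $u_0,\dots,u_{e-1}$ are nonempty, pairwise abelian equivalent, and $m=|u_0|$. The image $\sigma(\mathbf{w})$ of an infinite word is obtained by applying $\sigma$ letter by letter. *)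

(* Defs.v *)
From mathcomp Require Import all_boot.
Set Implicit Arguments. Unset Strict Implicit. Unset Printing Implicit Defensive.

(* Infinite words over T are functions nat -> T. *)

Definition factor (T : Type) (f : nat -> T) (p len : nat) : seq T :=
  mkseq (fun i => f (p + i)) len.

Definition occurs (T : Type) (u : seq T) (f : nat -> T) : Prop :=
  exists p, factor f p (size u) = u.

Definition abelian_eq (T : eqType) (u v : seq T) : bool := perm_eq u v.

Definition block (T : Type) (s : seq T) (m k : nat) : seq T :=
  take m (drop (k * m) s).

(* s = u_0 u_1 ... u_{e-1} with |u_0| = m, all u_k nonempty and pairwise
   abelian equivalent (hence all of length m); e positive. *)
Definition abelian_power (T : eqType) (s : seq T) (e m : nat) : Prop :=
  [/\ 0 < e, 0 < m, size s = e * m &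
      forall i j, i < e -> j < e -> abelian_eq (block s m i) (block s m j)].

(* Alphabet {0,1,#}: Some false = 0, Some true = 1, None = #. *)
Definition sigma_letter (N : nat) (b : bool) : seq (option bool) :=
  None :: nseq N.-1 (Some b).

Definition sigma_inf (N : nat) (w : nat -> bool) : nat -> option bool :=
  fun i => nth None (sigma_letter N (w (i %/ N))) (i %% N).

(* Main.v *)
Require Import Defs.
From mathcomp Require Import all_boot zify.

Lemma factor_cat (T : Type) (f : nat -> T) P L1 L2 :
  factor f P (L1 + L2) = factor f P L1 ++ factor f (P + L1) L2.
Proof.
rewrite /factor /mkseq iotaD map_cat; congr (_ ++ _).
by rewrite add0n -{1}[L1]addn0 iotaDl -map_comp; apply: eq_map => i /=; rewrite addnA.
Qed.

Lemma factor1 (T : Type) (f : nat -> T) P : factor f P 1 = [:: f P].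
Proof. by rewrite /factor /mkseq /= addn0. Qed.

Lemma size_factor (T : Type) (f : nat -> T) P L : size (factor f P L) = L.
Proof. exact: size_mkseq. Qed.

Lemma block_factor (T : Type) (f : nat -> T) P e m k : k < e ->
  block (factor f P (e * m)) m k = factor f (P + k * m) m.
Proof.
move=> ke; have -> : e * m = k * m + (m + (e - k.+1) * m).
  rewrite -mulSn -mulnDl; congr (_ * _); lia.
rewrite /block !factor_cat drop_size_cat ?size_factor // take_size_cat ?size_factor //.
Qed.

Lemma fE N w i : 0 < N -> sigma_inf N w i = if i %% N == 0 then None else Some (w (i %/ N)).
Proof.
move=> N0; rewrite /sigma_inf /sigma_letter.
have := ltn_pmod i N0; case: (i %% N) => //= k kN.
by rewrite nth_nseq; case: N N0 kN => //= n _ kn; rewrite ltnS in kn; rewrite kn.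
Qed.

Definition h N X := (X + N.-1) %/ N.

Lemma hS N X : 0 < N -> h N X.+1 = h N X + (X %% N == 0).
Proof.
move=> N0; rewrite /h.
have := ltn_pmod X N0; have := divn_eq X N.
move: (X %/ N) (X %% N) => a r -> rN.

have -> : (a * N + r).+1 + N.-1 = a * N + (r + N) by lia.
rewrite -addnA !divnMDl //; rewrite -addnA; congr (_ + _).
case: r rN => [|r] rN /=.
  by rewrite add0n divnn N0 divn_small // ltn_predL.
rewrite addn0 [r.+1 + N]addnC (divnDl _ (dvdnn _)) divnn N0 divn_small //.
rewrite [r.+1 + _]addnC -addSnnS prednK // (divnDl _ (dvdnn _)) divnn N0 divn_small //.
by apply: ltnW.
Qed.

Lemma cntNone N w P L : 0 < N ->
  count (pred1 None) (factor (sigma_inf N w) P L) + h N P = h N (P + L).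
Proof.
move=> N0; elim: L => [|L IH]; first by rewrite addn0.
rewrite addnS hS // -IH -addn1 factor_cat count_cat factor1 fE //=.
by case: (_ == 0) => /=; lia.
Qed.

Lemma Zt N w a t : 0 < N -> t <= N ->
  count (pred1 (Some false)) (factor (sigma_inf N w) (a * N) t) = t.-1 * ~~ w a.
Proof.
move=> N0; elim: t => [|t IH] tN; first by [].
rewrite -addn1 factor_cat count_cat factor1 /= fE // IH ?(ltnW tN) //.
rewrite modnMDl modn_small // divnMDl // divn_small // addn0.
case: t {IH} tN => [|t] tN //=; rewrite addn0; case: (w a) => /=; lia.
Qed.

Lemma Zq N w a q t : 0 < N -> t <= N ->
  count (pred1 (Some false)) (factor (sigma_inf N w) (a * N) (q * N + t)) =
  N.-1 * count (pred1 false) (factor w a q) + t.-1 * ~~ w (a + q).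
Proof.
move=> N0 tN; elim: q a => [|q IH] a; first by rewrite mul0n add0n Zt // addn0 /= muln0.
rewrite mulSn -addnA factor_cat count_cat Zt // -mulSnr IH.
rewrite -(add1n q) factor_cat count_cat factor1 addn1 addSn addnS /= addn0 eq_sym.
case: (w a) => /=; lia.
Qed.

Lemma count_ite (x y : bool) (s : seq bool) :
  count (fun b => if b then x else y) s = x * count id s + y * count negb s.
Proof. elim: s => [|[] s IH] /=; rewrite ?muln0 // IH; move: IH; case: x; case: y => /=; lia. Qed.

Lemma perm_bool (s1 s2 : seq bool) : size s1 = size s2 ->
  count_mem false s1 = count_mem false s2 -> perm_eq s1 s2.
Proof.
move=> hs hc; apply/permP => a.
have G s : count negb s = count_mem false s by apply: eq_count => -[].
have hc' : count negb s1 = count negb s2 by rewrite (G s1) (G s2).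
have E s : count a s = count (fun b => if b then a true else a false) s.
  by apply: eq_count => -[].
have F s : count id s + count negb s = size s.
  elim: s => [|b s IH] //=; rewrite -IH; case: b => /=; rewrite !add0n add1n ?addSn ?addnS //.
transitivity (count (fun b => if b then a true else a false) s1); first by apply: eq_count => -[].
transitivity (count (fun b => if b then a true else a false) s2); last by apply: eq_count => -[].
rewrite (count_ite (a true) (a false) s1) (count_ite (a true) (a false) s2); have := F s1; have := F s2.
clear E G hc; case: (a true); case: (a false) => /=; lia.
Qed.
Lemma modstep (M S1 S2 r a b : nat) : odd M -> 0 < r -> r < M -> a <= 2 -> b <= 2 ->
  M * S1 + r * a = M * S2 + r * b -> a = b.
Proof.
move=> oM r0 rM ha hb E.
have [t Ht] : exists t, M = t.*2.+1.
  by exists M./2; rewrite -[LHS]odd_double_half oM.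
subst M; rewrite -addnn in rM E *.
case: (ltngtP S1 S2) => [h|h|h].
- have [D HD] : exists D, S2 = S1 + D.+1 by exists (S2 - S1).-1; lia.
  rewrite HD in E.
  have {}E : r * a = (t + t).+1 * D.+1 + r * b by rewrite mulnDr in E; lia.
  case: D E {HD} => [|D] E.
    case: a ha E => [|[|[|]]] // _; case: b hb => [|[|[|]]] // _ E; lia.
  case: a ha E => [|[|[|]]] // _; case: b hb => [|[|[|]]] // _ E; nia.
- have [D HD] : exists D, S1 = S2 + D.+1 by exists (S1 - S2).-1; lia.
  rewrite HD in E.
  have {}E : (t + t).+1 * D.+1 + r * a = r * b by rewrite mulnDr in E; lia.
  case: D E {HD} => [|D] E.
    case: a ha E => [|[|[|]]] // _; case: b hb => [|[|[|]]] // _ E; lia.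
  case: a ha E => [|[|[|]]] // _; case: b hb => [|[|[|]]] // _ E; nia.
- move/eqP: E; rewrite h eqn_add2l eqn_mul2l => /orP[/eqP r00|/eqP //]; by rewrite r00 in r0.
Qed.
Lemma key (N r B : nat) (X : nat -> bool) (S : nat -> nat) e : ~~ odd N -> 2 <= e -> r < N.-1 ->
  (forall k, k < e -> B + r * X k = N.-1 * S k + r * X k.+1) -> forall k, k < e -> S k = S 0.
Proof.
move=> ev he rN E k ke.
have oM : odd N.-1 by case: N ev rN {E} => //= n; rewrite negbK.
have M0 : 0 < N.-1 by case: (N.-1) rN.
have E0 := E 0 (leq_trans (isT : 0 < 2) he).
have Ek := E k ke.
case: (posnP r) => [r0|rp].
  subst r; apply/eqP; rewrite -(eqn_pmul2l M0); apply/eqP; move: E0 Ek; rewrite !mul0n; lia.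
have cross : forall k k', k < e -> k' < e -> X k.+1 + X k' = X k'.+1 + X k.
  move=> k1 k2 h1 h2; have := E k1 h1; have := E k2 h2 => e2 e1.
  apply: (@modstep N.-1 (S k1) (S k2) r) => //; try by case: (X _); case: (X _).
  nia.
have X01 : X 0 = X 1.
  have := cross 0 1 (leq_trans (isT : 0 < 2) he) he.
  by case: (X 0); case: (X 1); case: (X 2).
have Xk : X k.+1 = X k.
  have := cross k 0 ke (leq_trans (isT : 0 < 2) he); rewrite -X01.
  by case: (X 0); case: (X k); case: (X k.+1).
apply/eqP; rewrite -(eqn_pmul2l M0); apply/eqP; move: E0 Ek; rewrite Xk -X01; lia.
Qed.

Theorem lemma3 (N : nat) (hN : 0 < N) (hev : ~~ odd N) (w : nat -> bool)
  (u : seq (option bool)) (e m : nat) :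
  abelian_power u e m -> N <= e -> occurs u (sigma_inf N w) ->
  N %| m /\ exists v : seq bool, abelian_power v e (m %/ N) /\ occurs v w.
Proof.
move=> [e0 m0 su Hab] Ne [p Hp].
have N2 : 2 <= N by case: N hN hev {Ne Hp} => [|[|n]].
have e2 : 2 <= e := leq_trans N2 Ne.
rewrite su in Hp.
have ub k : k < e -> block u m k = factor (sigma_inf N w) (p + k * m) m.
  by move=> ke; rewrite -Hp block_factor.
have cnt k a : k < e -> count a (factor (sigma_inf N w) (p + k * m) m) =
                         count a (factor (sigma_inf N w) p m).
  move=> ke; have := Hab k 0 ke e0; rewrite /abelian_eq ub // ub // mul0n addn0.
  by move/permP => ->.
set C := count (pred1 None) (factor (sigma_inf N w) p m).
have hk k : k <= e -> h N (p + k * m) = h N p + k * C.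
  elim: k => [|k IH] ke; first by rewrite !mul0n !addn0.
  rewrite mulSnr addnA -(@cntNone N w) // cnt // IH ?(ltnW ke) // -/C; lia.
have hNm : h N (p + N * m) = h N p + m.
  rewrite /h (_ : p + N * m + N.-1 = m * N + (p + N.-1)); last by nia.
  by rewrite divnMDl // addnC.
have mNC : m = N * C.
  by apply/eqP; rewrite -(eqn_add2l (h N p)) -hNm hk.
have mq : m %/ N = C by rewrite mNC mulKn.
split; first by rewrite mNC dvdn_mulr.
rewrite mq.
have C0 : 0 < C by move: m0; rewrite mNC muln_gt0 => /andP[].
set j := p %/ N; set s := p %% N.
have sN : s < N by rewrite ltn_pmod.
have pE k : p + k * m = (j + k * C) * N + s.
  by rewrite {1}(divn_eq p N) mNC -/j -/s; lia.
pose B k := count (pred1 (Some false)) (factor (sigma_inf N w) (p + k * m) m).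
pose S k := count (pred1 false) (factor w (j + k * C) C).
pose X k := ~~ w (j + k * C).
have Eq k : k < e -> B 0 + s.-1 * X k = N.-1 * S k + s.-1 * X k.+1.
  move=> ke; rewrite /B mul0n addn0 -(cnt k) // pE.
  have H := @Zq N w (j + k * C) C s hN (ltnW sN).
  rewrite (addnC (C * N) s) factor_cat count_cat (@Zt N w) ?(ltnW sN) // in H.
  rewrite (mulnC C N) -mNC in H.
  by rewrite /X /S mulSnr addnA addnC.
have rN : s.-1 < N.-1 by move: sN N2; clear; lia.
have SS := @key N s.-1 (B 0) X S e hev e2 rN Eq.
exists (factor w j (e * C)); split; last by exists j; rewrite size_factor.
split => //; first by rewrite size_factor.
move=> i i' ie i'e; rewrite !block_factor //; apply: perm_bool; rewrite ?size_factor //.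
by have := SS i ie; have := SS i' i'e; rewrite /S => -> ->.
Qed.
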